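(* Let $(\xi_n)_{n\ge0}$ be a real-valued process adapted to a filtration $(\mathcal F_n)_{n\ge0}$, and suppose there exist $a\in\mathbb R$ and $b>0$ such that: (1) $\mathbb E\big((\xi_{k+1}-\xi_k)1_{\{\xi_k\ge a\}}\mid\mathcal F_k\big)\le 0$ a.s. for all $k$; (2) $\limsup_{k\to\infty}1_{\{\xi_k<a<\xi_{k+1}\}}(\xi_{k+1}-a)\le b$ almost surely; (3) $\sum_k\mathbb E\big[(\xi_{k+1}-\xi_k)^2 1_{\{\xi_k\ge a\}}\big]<\infty$. Let $A^\pm_a$ be the event that $\xi_n-a$ switches sign infinitely often. Then almost surely on $A^\pm_a$ we have $\limsup_{n\to\infty}\xi_n\le a+b$. *)

(* Defs.v *)
From HB Require Import structures.
From mathcomp Require Import all_boot all_order all_algebra.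
From mathcomp Require Import all_classical all_reals all_analysis.
Set Implicit Arguments. Unset Strict Implicit. Unset Printing Implicit Defensive.
Import Order.TTheory GRing.Theory Num.Theory.
Local Open Scope classical_set_scope.
Local Open Scope ring_scope.

Definition filtration d (T : measurableType d) (F : nat -> set (set T)) :=
  (forall n, sigma_algebra setT (F n)) /\
  (forall n, F n `<=` measurable) /\
  (forall n, F n `<=` F n.+1).

Definition measurable_wrt d (T : measurableType d) (R : realType)
  (G : set (set T)) (f : T -> R) :=
  forall B : set R, measurable B -> G (f @^-1` B).

Definition adapted d (T : measurableType d) (R : realType)
  (F : nat -> set (set T)) (xi : nat -> T -> R) :=
  forall n, @measurable_wrt d T R (F n) (xi n).

Definition cond_exp_version d (T : measurableType d) (R : realType)
  (P : probability T R) (G : set (set T)) (X Y : T -> R) :=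
  [/\ P.-integrable setT (EFin \o X),
      measurable_wrt G Y,
      P.-integrable setT (EFin \o Y) &
      forall B, G B -> (\int[P]_(x in B) (Y x)%:E = \int[P]_(x in B) (X x)%:E)%E].

Definition cond_exp_nonpos d (T : measurableType d) (R : realType)
  (P : probability T R) (G : set (set T)) (X : T -> R) :=
  exists Y, cond_exp_version P G X Y /\ {ae P, forall w, Y w <= 0}.

Definition indic_b (R : realType) (b : bool) : R := if b then 1 else 0.

Definition switches_io (R : realType) T (xi : nat -> T -> R) (a : R) : set T :=
  [set w | (forall N, exists2 n, (N <= n)%N & xi n w < a) /\
           (forall N, exists2 n, (N <= n)%N & a < xi n w)].

(* Main.v *)
Require Import Defs.
From HB Require Import structures.
From mathcomp Require Import all_boot all_order all_algebra.
From mathcomp Require Import all_classical all_reals all_analysis.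
From mathcomp Require Import measurable_realfun.
From mathcomp Require Import ring lra zify.
Import Order.TTheory GRing.Theory Num.Theory.
Local Open Scope classical_set_scope.
Local Open Scope ring_scope.
Set Implicit Arguments. Unset Strict Implicit.

Section Gmeas.
Context (d : measure_display) (T : measurableType d) (R : realType) (G : set (set T)).
Hypothesis sG : sigma_algebra setT G.

Lemma mwrtE (f : T -> R) :
  measurable_wrt G f <-> measurable_fun (setT : set (g_sigma_algebraType G)) f.
Proof.
have E := measurable_g_measurableTypeE sG.
split.
- move=> mf _ B mB; rewrite setTI E; exact: mf.
- move=> mf B mB; rewrite -E -[X in _ X]setTI; exact: mf.
Qed.

Lemma mwrtD (f g : T -> R) : measurable_wrt G f -> measurable_wrt G g ->
  measurable_wrt G (fun w => f w + g w).
Proof. move=> /mwrtE mf /mwrtE mg; apply/mwrtE; exact: measurable_realfun.measurable_funD. Qed.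

Lemma mwrtM (f g : T -> R) : measurable_wrt G f -> measurable_wrt G g ->
  measurable_wrt G (fun w => f w * g w).
Proof. move=> /mwrtE mf /mwrtE mg; apply/mwrtE; exact: measurable_realfun.measurable_funM. Qed.

Lemma mwrtN (f : T -> R) : measurable_wrt G f -> measurable_wrt G (fun w => - f w).
Proof. move=> /mwrtE mf; apply/mwrtE; exact: measurableT_comp. Qed.

Lemma mwrtB (f g : T -> R) : measurable_wrt G f -> measurable_wrt G g ->
  measurable_wrt G (fun w => f w - g w).
Proof. by move=> mf mg; apply: mwrtD => //; exact: mwrtN. Qed.

Lemma mwrt_cst (c : R) : measurable_wrt G (fun _ => c).
Proof. apply/mwrtE; exact: measurable_cst. Qed.

Lemma mwrt_max (f g : T -> R) : measurable_wrt G f -> measurable_wrt G g ->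
  measurable_wrt G (fun w => Num.max (f w) (g w)).
Proof. move=> /mwrtE mf /mwrtE mg; apply/mwrtE; exact: measurable_realfun.measurable_maxr. Qed.

Lemma mwrt_sum n (f : 'I_n -> T -> R) : (forall j, measurable_wrt G (f j)) ->
  measurable_wrt G (fun w => \sum_(j < n) f j w).
Proof.
elim: n f => [|n IH] f mf.
  under [X in measurable_wrt _ X]funext do rewrite big_ord0.
  exact: mwrt_cst.
under [X in measurable_wrt _ X]funext do rewrite big_ord_recr /=.
apply: mwrtD; last exact: mf.
exact: (IH (fun j => f (widen_ord (leqnSn n) j))).
Qed.

Lemma G_setT : G setT.
Proof. by case: sG => G0 GC _; have := GC set0 G0; rewrite setD0. Qed.

Lemma G_setC A : G A -> G (~` A).
Proof. by case: sG => G0 GC _ /GC; rewrite setTD. Qed.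

Lemma mwrt_indic (p : T -> bool) : G [set w | p w] ->
  measurable_wrt G (fun w => indic_b R (p w)).
Proof.
move=> Gp B _.
have [B1|B1] := pselect (B 1); have [B0|B0] := pselect (B 0).
- suff -> : (fun w => indic_b R (p w)) @^-1` B = setT by exact: G_setT.
  by apply/seteqP; split => w //= _; rewrite /indic_b; case: (p w).
- suff -> : (fun w => indic_b R (p w)) @^-1` B = [set w | p w] by [].
  apply/seteqP; split => w /=; rewrite /indic_b; case: (p w) => //.
- suff -> : (fun w => indic_b R (p w)) @^-1` B = ~` [set w | p w] by exact: G_setC.
  apply/seteqP; split => w /=; rewrite /indic_b; case: (p w) => //.
- suff -> : (fun w => indic_b R (p w)) @^-1` B = set0 by case: sG.
  apply/seteqP; split => w /=; rewrite /indic_b; case: (p w) => //.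
Qed.

Lemma G_I A B : G A -> G B -> G (A `&` B).
Proof.
have E := measurable_g_measurableTypeE sG.
move=> hA hB; have : (G.-sigma.-measurable (A `&` B)).
  by apply: measurableI; rewrite E.
by rewrite E.
Qed.

Lemma G_lt (f : T -> R) c : measurable_wrt G f -> G [set w | f w < c].
Proof.
move=> mf; have := mf `]-oo, c[%classic (measurable_itv _).
by congr G; apply/seteqP; split => w /=; rewrite in_itv.
Qed.

Lemma G_le (f : T -> R) c : measurable_wrt G f -> G [set w | c <= f w].
Proof.
move=> mf; have := mf `[c, +oo[%classic (measurable_itv _).
by congr G; apply/seteqP; split => w /=; rewrite in_itv /= andbT.
Qed.

End Gmeas.

Lemma mwrt_sub d (T : measurableType d) (R : realType) (G H : set (set T)) (f : T -> R) :
  G `<=` H -> measurable_wrt G f -> measurable_wrt H f.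
Proof. by move=> GH mf B mB; apply: GH; exact: mf. Qed.

Lemma mwrt_meas d (T : measurableType d) (R : realType) (G : set (set T)) (f : T -> R) :
  G `<=` measurable -> measurable_wrt G f -> measurable_fun setT f.
Proof. by move=> GH mf _ B mB; rewrite setTI; apply: GH; exact: mf. Qed.

Section Main.
Context (d : measure_display) (T : measurableType d) (R : realType) (P : probability T R)
  (F : nat -> set (set T)) (xi : nat -> T -> R) (a : R).
Hypothesis hF : filtration F.
Hypothesis hxi : adapted F xi.
Hypothesis hce : forall k, cond_exp_nonpos P (F k)
     (fun w => (xi k.+1 w - xi k w) * indic_b R (a <= xi k w)).

Definition Dl k w := (xi k.+1 w - xi k w) * indic_b R (a <= xi k w).
Definition pp (x : R) := Num.max x 0.
Definition nn (x : R) := Num.max (- x) 0.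

Lemma pp_ge0 x : 0 <= pp x. Proof. by rewrite /pp le_max lexx orbT. Qed.
Lemma nn_ge0 x : 0 <= nn x. Proof. by rewrite /nn le_max lexx orbT. Qed.

Lemma Fsig k : sigma_algebra setT (F k). Proof. by case: hF. Qed.
Lemma Fmeas k : F k `<=` measurable. Proof. by case: hF => _ []. Qed.
Lemma Fmono m n : (m <= n)%N -> F m `<=` F n.
Proof.
move=> /subnK <-; elim: (n - m)%N => [|k IH] //.
by apply: subset_trans IH _; rewrite addSn; case: hF => _ [] _; apply.
Qed.

Lemma mwrt_xi m n : (m <= n)%N -> measurable_wrt (F n) (xi m).
Proof. by move=> mn; apply: (mwrt_sub (Fmono mn)); exact: hxi. Qed.

Lemma mDl k : measurable_wrt (F k.+1) (Dl k).
Proof.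
apply: (mwrtM (Fsig _)).
  by apply: (mwrtB (Fsig _)); exact: mwrt_xi.
apply: (mwrt_indic (Fsig _)).
exact: (G_le a (mwrt_xi (leqnSn k))).
Qed.

Lemma mDlT k : measurable_fun setT (Dl k).
Proof. exact: (mwrt_meas (@Fmeas k.+1) (mDl k)). Qed.

Lemma condS k S : F k S ->
  (\int[P]_(w in S) (pp (Dl k w))%:E <= \int[P]_(w in S) (nn (Dl k w))%:E)%E.
Proof.
move=> FS; have mS := Fmeas FS.
have [Y [[iX mY iY eqI] aeY]] := hce k.
have mYT : measurable_fun setT Y := mwrt_meas (@Fmeas k) mY.
have I0 : (\int[P]_(w in S) (Y w)%:E <= 0)%E.
  rewrite integralE.
  have -> : (\int[P]_(w in S) (EFin \o Y)^\+ w = 0)%E.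
    apply/le_anti/andP; split; last exact: integral_ge0.
    rewrite -(integral0 P S); apply: (@ae_ge0_le_integral _ _ _ P S mS ((EFin \o Y)^\+)%E (cst 0%E)).
    - by move=> x Sx; exact: funepos_ge0.
    - apply: measurable_funepos; apply/measurable_EFinP.
      exact: measurable_funS mYT.
    - by move=> x _.
    - exact: measurable_cst.
    - apply: filterS aeY => w Yw _; rewrite funeposE /=.
      by rewrite -EFin_max lee_fin ge_max lexx Yw.
  by rewrite sub0e oppe_le0; apply: integral_ge0 => x _; exact: funeneg_ge0.
have iXS : P.-integrable S (EFin \o Dl k) := integrableS measurableT mS (subsetT _) iX.
move: I0; rewrite eqI // (integralE P S (EFin \o Dl k)) sube_le0.
have -> : ((EFin \o Dl k)^\+ = (fun w => (pp (Dl k w))%:E))%E.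
  by apply/funext => w; rewrite funeposE /= -EFin_max.
have -> : ((EFin \o Dl k)^\- = (fun w => (nn (Dl k w))%:E))%E.
  by apply/funext => w; rewrite funenegE /= -EFin_max.
by [].
Qed.

End Main.

Lemma sum_trunc (R : realType) (y : R) (n : nat) : 0 <= y <= n%:R ->
  \sum_(j < n.+1) (j%:R * indic_b R ((j%:R <= y) && (y < j.+1%:R))) = (Num.Def.trunc y)%:R.
Proof.
case/andP=> y0 yn.
have tn : (Num.Def.trunc y < n.+1)%N.
  have /andP[h _] := truncn_itv y0.
  by rewrite ltnS -(ler_nat R); apply: le_trans h yn.
rewrite (bigD1 (Ordinal tn)) //= big1 ?addr0.
  by rewrite /indic_b (truncn_itv y0) mulr1.
move=> j hj; rewrite /indic_b; case: ifP => hy; last by rewrite mulr0.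
exfalso; move/negP: hj; apply; apply/eqP/val_inj => /=.
by apply/eqP; rewrite eq_sym (truncn_eq _ y0).
Qed.

Section Expand.
Context (d : measure_display) (T : measurableType d) (R : realType) (P : probability T R).

Lemma int_expand n (cf : 'I_n -> R) (g : T -> R) (p : 'I_n -> T -> bool) :
  (forall j, measurable [set w | p j w]) -> measurable_fun setT g ->
  (forall w, 0 <= g w) -> (forall j, 0 <= cf j) ->
  (\int[P]_w ((\sum_(j < n) cf j * indic_b R (p j w)) * g w)%:E =
   \sum_(j < n) (cf j)%:E * \int[P]_(w in [set w | p j w]) (g w)%:E)%E.
Proof.
move=> mp mg g0 c0.
have ind0 (b : bool) : 0 <= indic_b R b by rewrite /indic_b; case: b.
have mind j : measurable_fun setT (fun w => indic_b R (p j w)).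
  move=> _ B mB; rewrite setTI.
  have [B1|B1] := pselect (B 1); have [B0|B0] := pselect (B 0).
  - suff -> : (fun w => indic_b R (p j w)) @^-1` B = setT by [].
    by apply/seteqP; split => w //= _; rewrite /indic_b; case: (p j w).
  - suff -> : (fun w => indic_b R (p j w)) @^-1` B = [set w | p j w] by [].
    apply/seteqP; split => w /=; rewrite /indic_b; case: (p j w) => //.
  - suff -> : (fun w => indic_b R (p j w)) @^-1` B = ~` [set w | p j w].
      exact: measurableC.
    apply/seteqP; split => w /=; rewrite /indic_b; case: (p j w) => //.
  - suff -> : (fun w => indic_b R (p j w)) @^-1` B = set0 by [].
    apply/seteqP; split => w /=; rewrite /indic_b; case: (p j w) => //.
under eq_integral do rewrite mulr_suml -sumEFin.
rewrite ge0_integral_sum //; last first.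
- by move=> j w _; rewrite lee_fin mulr_ge0 // mulr_ge0.
- move=> j; apply/measurable_EFinP; apply: measurable_funM => //.
  apply: measurable_funM => //; exact: measurable_cst.
apply: eq_bigr => j _.
under eq_integral do rewrite -mulrA EFinM.
rewrite ge0_integralZl_EFin //; last 2 first.
- by move=> w _; rewrite lee_fin mulr_ge0.
- by apply/measurable_EFinP; exact: measurable_funM.
congr (_ * _)%E; rewrite [RHS]integral_mkcond; apply: eq_integral => w _.
rewrite patchE /indic_b; case: (boolP (p j w)) => h.
  by rewrite (mem_set (h : [set w | p j w] w)) mul1r.
have -> : (w \in [set w | p j w]) = false.
  by apply/negP => /set_mem /= hh; rewrite hh in h.
by rewrite mul0r.
Qed.

End Expand.

Section Main2.
Context (d : measure_display) (T : measurableType d) (R : realType) (P : probability T R)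
  (F : nat -> set (set T)) (xi : nat -> T -> R) (a : R).
Hypothesis hF : filtration F.
Hypothesis hxi : adapted F xi.
Hypothesis hce : forall k, cond_exp_nonpos P (F k)
     (fun w => (xi k.+1 w - xi k w) * indic_b R (a <= xi k w)).

Lemma mTn n (f : T -> R) : measurable_wrt (F n) f -> measurable_fun setT (fun w => (f w)%:E).
Proof. by move=> mf; apply/measurable_EFinP; exact: (mwrt_meas (@Fmeas _ _ _ hF n) mf). Qed.

Lemma condZ k (Z : T -> R) (c : R) : 0 < c -> measurable_wrt (F k) Z ->
  (forall w, 0 <= Z w <= c) ->
  (\int[P]_w (Z w * pp (Dl xi a k w))%:E <= \int[P]_w (Z w * nn (Dl xi a k w))%:E)%E.
Proof.
move=> c0 mZ Zb.
set D := Dl xi a k.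
have sig := Fsig hF k.+1.
have sigk := Fsig hF k.
have mDk : measurable_wrt (F k.+1) D := mDl a hF hxi k.
have mZk : measurable_wrt (F k.+1) Z := mwrt_sub (Fmono hF (leqnSn k)) mZ.
have mpp : measurable_wrt (F k.+1) (fun w => pp (D w)).
  exact: (mwrt_max sig mDk (mwrt_cst sig 0)).
have mnn : measurable_wrt (F k.+1) (fun w => nn (D w)).
  exact: (mwrt_max sig (mwrtN sig mDk) (mwrt_cst sig 0)).
have [Y [[iX _ _ _] _]] := hce k.
have fin : (\int[P]_w (pp (D w))%:E < +oo)%E.
  have := integral_funepos_lt_pinfty measurableT iX.
  congr (_ < _)%E; apply: eq_integral => w _.
  by rewrite funeposE /= -EFin_max.
have Ige0 : (0 <= \int[P]_w (pp (D w))%:E)%E.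
  by apply: integral_ge0 => w _; rewrite lee_fin pp_ge0.
set r := fine (\int[P]_w (pp (D w))%:E).
have Ir : (\int[P]_w (pp (D w))%:E = r%:E)%E.
  by rewrite /r fineK // ge0_fin_numE.
have r0 : 0 <= r by rewrite -lee_fin -Ir.
apply/lee_addgt0Pr => e e0.
have [m hm] : exists m : nat, c * r * (m.+1%:R)^-1 < e.
  have cr1 : 0 < c * r + 1.
    have : 0 <= c * r by rewrite mulr_ge0 // ltW.
    lra.
  have q0 : 0 < e / (c * r + 1) by rewrite divr_gt0.
  have [m] := ltr_add_invr q0; rewrite add0r => hm; exists m.
  have hq : e / (c * r + 1) * (c * r + 1) = e by rewrite divfK // gt_eqF.
  have t0 : 0 < (m.+1%:R : R)^-1 by rewrite invr_gt0.
  have cr0 : 0 <= c * r by rewrite mulr_ge0 // ltW.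
  move: hm hq t0 cr0 cr1; set t := (m.+1%:R : R)^-1; set q := e / (c * r + 1).
  move: (c * r) => u; nra.
set m' := m.+1.
have m'0 : 0 < (m'%:R : R) by rewrite ltr0n.
set h := c / m'%:R.
have h0 : 0 < h by rewrite divr_gt0.
set y := fun w => Z w * m'%:R / c.
have y0 w : 0 <= y w <= m'%:R.
  have /andP[z0 zc] := Zb w; apply/andP; split.
    by rewrite /y divr_ge0 // ?mulr_ge0 // ltW.
  rewrite /y ler_pdivrMr // mulrC ler_pM2l //.
have hy w : h * y w = Z w.
  have cn0 : c != 0 by rewrite gt_eqF.
  have mn0 : (m'%:R : R) != 0 by rewrite gt_eqF.
  rewrite /h /y; field; by rewrite cn0 mn0.
have my : measurable_wrt (F k) y.
  apply: (mwrtM sigk); last exact: (mwrt_cst sigk).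
  exact: (mwrtM sigk mZ (mwrt_cst sigk _)).
set p := fun (j : 'I_m'.+1) w => ((j : nat)%:R <= y w) && (y w < (j : nat).+1%:R).
have Fp j : F k [set w | p j w].
  have -> : [set w | p j w] = [set w | (j : nat)%:R <= y w] `&` [set w | y w < (j : nat).+1%:R].
    by apply/seteqP; split => w /=; rewrite /p; [move/andP|case=> -> ->].
  exact: (G_I sigk (G_le _ my) (G_lt _ my)).
have mp j : measurable [set w | p j w] by exact: (@Fmeas _ _ _ hF k).
set Zm := fun w => \sum_(j < m'.+1) (h * (j : nat)%:R) * indic_b R (p j w).
have ZmE w : Zm w = h * (Num.Def.trunc (y w))%:R.
  rewrite /Zm -(sum_trunc (y0 w)) mulr_sumr; apply: eq_bigr => j _.
  by rewrite mulrA.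
have Zm_le w : Zm w <= Z w.
  rewrite ZmE -hy ler_pM2l //.
  by have /andP[] := truncn_itv (proj1 (andP (y0 w))).
have Z_le w : Z w <= Zm w + h.
  rewrite ZmE -hy -[X in _ + X]mulr1 -mulrDr ler_pM2l // natr1.
  by have /andP[_ /ltW] := truncn_itv (proj1 (andP (y0 w))).
have hj0 (j : 'I_m'.+1) : 0 <= h * (j : nat)%:R by rewrite mulr_ge0 // ltW.
have mDT : measurable_fun setT D := mwrt_meas (@Fmeas _ _ _ hF k.+1) mDk.
have mppT : measurable_fun setT (fun w => pp (D w)) := mwrt_meas (@Fmeas _ _ _ hF k.+1) mpp.
have mnnT : measurable_fun setT (fun w => nn (D w)) := mwrt_meas (@Fmeas _ _ _ hF k.+1) mnn.
have Zm0 w : 0 <= Zm w by rewrite ZmE mulr_ge0 // ltW.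
have mZm : measurable_wrt (F k.+1) Zm.
  apply: (mwrt_sum sig) => j; apply: (mwrtM sig); first exact: (mwrt_cst sig).
  apply: (mwrt_indic sig); exact: (Fmono hF (leqnSn k) (Fp j)).
have step1 : (\int[P]_w (Z w * pp (D w))%:E <=
    \int[P]_w (Zm w * pp (D w))%:E + h%:E * r%:E)%E.
  apply: (@le_trans _ _ (\int[P]_w ((Zm w * pp (D w))%:E + (h * pp (D w))%:E))%E).
    apply: ge0_le_integral => //.
    - by move=> w _; rewrite lee_fin mulr_ge0 ?pp_ge0 //; case/andP: (Zb w).
    - exact: (mTn (mwrtM sig mZk mpp)).
    - exact: (mTn (mwrtD sig (mwrtM sig mZm mpp) (mwrtM sig (mwrt_cst sig h) mpp))).
    - move=> w _; rewrite -EFinD lee_fin -mulrDl ler_wpM2r ?pp_ge0 //.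
  rewrite ge0_integralD //; last 4 first.
  - by move=> w _; rewrite lee_fin mulr_ge0 ?pp_ge0.
  - exact: (mTn (mwrtM sig mZm mpp)).
  - by move=> w _; rewrite lee_fin mulr_ge0 ?pp_ge0 // ltW.
  - exact: (mTn (mwrtM sig (mwrt_cst sig h) mpp)).
  under [X in (_ + X <= _)%E]eq_integral do rewrite EFinM.
  rewrite ge0_integralZl_EFin //; first by rewrite Ir.
  all: try first [by move=> x Hx; rewrite lee_fin pp_ge0 | exact: (mTn mpp) | exact: ltW | exact: measurableT].
have step2 : (\int[P]_w (Zm w * pp (D w))%:E <= \int[P]_w (Zm w * nn (D w))%:E)%E.
  rewrite /Zm int_expand //; last by move=> w; exact: pp_ge0.
  rewrite int_expand //; last by move=> w; exact: nn_ge0.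
  apply: lee_sum => j _; apply: lee_wpmul2l; first by rewrite lee_fin.
  exact: (condS hF hce (Fp j)).
have step3 : (\int[P]_w (Zm w * nn (D w))%:E <= \int[P]_w (Z w * nn (D w))%:E)%E.
  apply: ge0_le_integral => //.
  - by move=> w _; rewrite lee_fin mulr_ge0 ?nn_ge0.
  - exact: (mTn (mwrtM sig mZm mnn)).
  - exact: (mTn (mwrtM sig mZk mnn)).
  - by move=> w _; rewrite lee_fin ler_wpM2r ?nn_ge0.
apply: (le_trans step1); rewrite -EFinM.
apply: leeD.
  exact: le_trans step2 step3.
rewrite lee_fin ltW //; apply: le_lt_trans hm.
by rewrite /h mulrAC.
Qed.

End Main2.

Fixpoint Up (T : Type) (R : realType) (D : nat -> T -> R) (eps : R) (N i : nat) (w : T) : R :=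
  match i with
  | 0 => 0
  | i'.+1 => Num.max (Up D eps N i' w + D (N + i')%N w * indic_b R (Up D eps N i' w < eps)) 0
  end.

Fixpoint Vp (T : Type) (R : realType) (D : nat -> T -> R) (N i : nat) (w : T) : R :=
  match i with
  | 0 => 0
  | i'.+1 => Num.max (Vp D N i' w + D (N + i')%N w) 0
  end.

Section Proc.
Context (T : Type) (R : realType) (D : nat -> T -> R) (eps : R) (N : nat).

Lemma Up_ge0 i w : 0 <= Up D eps N i w.
Proof. by case: i => [|i] //=; rewrite le_max lexx orbT. Qed.

Lemma Vp_ge0 i w : 0 <= Vp D N i w.
Proof. by case: i => [|i] //=; rewrite le_max lexx orbT. Qed.

Lemma Up_V i w : Up D eps N i w < eps -> Up D eps N i w = Vp D N i w.
Proof.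
elim: i => [|i IH] //=.
have [hl|hl] := ltP (Up D eps N i w) eps.
  by rewrite mulr1 IH.
rewrite mulr0 addr0 max_l ?Up_ge0 // => h.
by move: (lt_le_trans h hl); rewrite ltxx.
Qed.

Lemma V_U i w : eps <= Vp D N i w -> eps <= Up D eps N i w.
Proof.
move=> h; have [//|hl] := leP eps (Up D eps N i w).
have e := Up_V hl; rewrite e in hl; by move: (lt_le_trans hl h); rewrite ltxx.
Qed.

Lemma Vp_incr (xs : nat -> T -> R) m n w : (m <= n)%N ->
  (forall j, (m <= j < n)%N -> D (N + j)%N w = xs (N + j).+1 w - xs (N + j)%N w) ->
  Vp D N m w + xs (N + n)%N w - xs (N + m)%N w <= Vp D N n w.
Proof.
move=> /subnK <-; elim: (n - m)%N => [|k IH] hD; first by rewrite add0n addrK.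
have hj : (m <= k + m < k.+1 + m)%N by rewrite leq_addl addSn ltnSn.
have IH' : Vp D N m w + xs (N + (k + m))%N w - xs (N + m)%N w <= Vp D N (k + m) w.
  apply: IH => j /andP[h1 h2]; apply: hD; rewrite h1 /=.
  by apply: (ltn_trans h2); rewrite addSn ltnSn.
have e1 := hD _ hj.
rewrite addSn /=; rewrite le_max; apply/orP; left.
rewrite e1 addnS; move: IH'; lra.
Qed.

End Proc.

Lemma ptw_real (R : realType) (x dd : R) (b : bool) : 0 <= x ->
  Num.max (x + dd * indic_b R b) 0 ^+ 2 + 2 * (x * indic_b R b * nn dd) <=
  x ^+ 2 + dd ^+ 2 + 2 * (x * indic_b R b * pp dd).
Proof.
move=> x0; case: b; rewrite /indic_b /=.
  rewrite !mulr1 /pp /nn.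
  case: (leP (x + dd) 0) => h1; case: (leP dd 0) => h2; case: (leP (- dd) 0) => h3; nra.
rewrite !mulr0 mul0r addr0 max_l //; nra.
Qed.

Lemma ecancel (R : realType) (X Y Z p q : \bar R) : q \is a fin_num -> (p <= q)%E ->
  (X + 2%:E * q <= Y + Z + 2%:E * p)%E -> (X <= Y + Z)%E.
Proof.
move=> qf pq h; rewrite -(@leeD2rE _ (2%:E * q)); last by rewrite fin_numM.
by apply: (le_trans h); apply: leeD2l; apply: lee_wpmul2l.
Qed.

Definition sq (T : Type) (R : realType) (xi : nat -> T -> R) (a : R) k w :=
  ((xi k.+1 w - xi k w) ^+ 2) * indic_b R (a <= xi k w).

Section Bound.
Context (d : measure_display) (T : measurableType d) (R : realType) (P : probability T R)
  (F : nat -> set (set T)) (xi : nat -> T -> R) (a : R).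
Hypothesis hF : filtration F.
Hypothesis hxi : adapted F xi.
Hypothesis hce : forall k, cond_exp_nonpos P (F k)
     (fun w => (xi k.+1 w - xi k w) * indic_b R (a <= xi k w)).
Variables (eps : R) (N : nat).
Hypothesis eps0 : 0 < eps.

Local Notation D := (Dl xi a).
Local Notation U := (Up D eps N).

Lemma intD2 (f g : T -> R) : measurable_fun setT f -> measurable_fun setT g ->
  (forall w, 0 <= f w) -> (forall w, 0 <= g w) ->
  (\int[P]_w (f w + g w)%:E = \int[P]_w (f w)%:E + \int[P]_w (g w)%:E)%E.
Proof.
move=> mf mg f0 g0; under eq_integral do rewrite EFinD.
apply: ge0_integralD => //.
- by move=> w _; rewrite lee_fin.
- exact/measurable_EFinP.
- by move=> w _; rewrite lee_fin.
- exact/measurable_EFinP.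
Qed.

Lemma intZ2 (c : R) (f : T -> R) : 0 <= c -> measurable_fun setT f ->
  (forall w, 0 <= f w) ->
  (\int[P]_w (c * f w)%:E = c%:E * \int[P]_w (f w)%:E)%E.
Proof.
move=> c0 mf f0; under eq_integral do rewrite EFinM.
apply: ge0_integralZl_EFin => //.
- by move=> w _; rewrite lee_fin.
- exact/measurable_EFinP.
Qed.

Lemma Dsq k w : D k w ^+ 2 = sq xi a k w.
Proof. by rewrite /Dl /sq exprMn /indic_b; case: (a <= xi k w); rewrite ?expr1n ?expr0n ?mulr0 ?mulr1. Qed.

Lemma mU i : measurable_wrt (F (N + i)) (U i).
Proof.
elim: i => [|i IH] /=.
  exact: (mwrt_cst (Fsig hF _)).
have sig := Fsig hF (N + i.+1).
have IH' : measurable_wrt (F (N + i.+1)) (U i).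
  by apply: (mwrt_sub (Fmono hF _) IH); rewrite leq_add2l.
apply: (mwrt_max sig); last exact: (mwrt_cst sig).
apply: (mwrtD sig IH'); apply: (mwrtM sig).
  by have := mDl a hF hxi (N + i); rewrite -addnS.
apply: (mwrt_indic sig); exact: (G_lt _ IH').
Qed.

Lemma nn_fin k : (\int[P]_w (nn (D k w))%:E < +oo)%E.
Proof.
have [Y [[iX _ _ _] _]] := hce k.
have := integral_funeneg_lt_pinfty measurableT iX.
congr (_ < _)%E; apply: eq_integral => w _.
by rewrite funenegE /= -EFin_max.
Qed.

Lemma stepU i : (\int[P]_w ((U i.+1 w) ^+ 2)%:E <=
   \int[P]_w ((U i w) ^+ 2)%:E + \int[P]_w (sq xi a (N + i) w)%:E)%E.
Proof.
set k := (N + i)%N.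
set Z := fun w => U i w * indic_b R (U i w < eps).
have sig := Fsig hF k.+1.
have sigk := Fsig hF k.
have mUi : measurable_wrt (F k) (U i) := mU i.
have mZ : measurable_wrt (F k) Z.
  apply: (mwrtM sigk mUi); apply: (mwrt_indic sigk); exact: (G_lt _ mUi).
have Zb w : 0 <= Z w <= eps.
  rewrite /Z /indic_b; case: ifPn => h; rewrite ?mulr1 ?mulr0 ?lexx ?(ltW eps0) //.
  by rewrite Up_ge0 ltW.
have mDk : measurable_wrt (F k.+1) (D k) := mDl a hF hxi k.
have mZk : measurable_wrt (F k.+1) Z := mwrt_sub (Fmono hF (leqnSn k)) mZ.
have mUk : measurable_wrt (F k.+1) (U i) := mwrt_sub (Fmono hF (leqnSn k)) mUi.
have mU1 : measurable_wrt (F k.+1) (U i.+1) by have := mU i.+1; rewrite addnS.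
have mpp : measurable_wrt (F k.+1) (fun w => pp (D k w)).
  exact: (mwrt_max sig mDk (mwrt_cst sig 0)).
have mnn : measurable_wrt (F k.+1) (fun w => nn (D k w)).
  exact: (mwrt_max sig (mwrtN sig mDk) (mwrt_cst sig 0)).
have mT (f : T -> R) : measurable_wrt (F k.+1) f -> measurable_fun setT (fun w => (f w)%:E).
  exact: (mTn hF).
have Z0 w : 0 <= Z w by case/andP: (Zb w).
have H : (\int[P]_w ((U i.+1 w) ^+ 2 + 2 * (Z w * nn (D k w)))%:E <=
    \int[P]_w ((U i w) ^+ 2 + sq xi a k w + 2 * (Z w * pp (D k w)))%:E)%E.
  apply: ge0_le_integral => //.
  - by move=> w _; rewrite lee_fin addr_ge0 ?sqr_ge0 // mulr_ge0 // mulr_ge0 ?nn_ge0.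
  - apply: mT; apply: (mwrtD sig); first exact: (mwrtM sig mU1 mU1).
    exact: (mwrtM sig (mwrt_cst sig 2) (mwrtM sig mZk mnn)).
  - apply: mT; apply: (mwrtD sig); last exact: (mwrtM sig (mwrt_cst sig 2) (mwrtM sig mZk mpp)).
    apply: (mwrtD sig); first exact: (mwrtM sig mUk mUk).
    have -> : sq xi a k = fun w => D k w * D k w by apply/funext => w; rewrite -Dsq expr2.
    exact: (mwrtM sig mDk mDk).
  - move=> w _; rewrite lee_fin -Dsq /= /Z.
    rewrite /k; apply: ptw_real; exact: Up_ge0.
have mR (f : T -> R) : measurable_wrt (F k.+1) f -> measurable_fun setT f.
  exact: (mwrt_meas (@Fmeas _ _ _ hF k.+1)).
have msq : measurable_wrt (F k.+1) (sq xi a k).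
  have -> : sq xi a k = fun w => D k w * D k w by apply/funext => w; rewrite -Dsq expr2.
  exact: (mwrtM sig mDk mDk).
have sq0 w : 0 <= sq xi a k w by rewrite -Dsq sqr_ge0.
have Zn0 w : 0 <= Z w * nn (D k w) by rewrite mulr_ge0 ?nn_ge0.
have Zp0 w : 0 <= Z w * pp (D k w) by rewrite mulr_ge0 ?pp_ge0.
have mZn : measurable_wrt (F k.+1) (fun w => Z w * nn (D k w)) := mwrtM sig mZk mnn.
have mZp : measurable_wrt (F k.+1) (fun w => Z w * pp (D k w)) := mwrtM sig mZk mpp.
have mU1T := mR _ (mwrtM sig mU1 mU1).
have mUT := mR _ (mwrtM sig mUk mUk).
have mZnT := mR _ mZn.
have mZpT := mR _ mZp.
have msqT := mR _ msq.
have m2ZnT := mR _ (mwrtM sig (mwrt_cst sig 2) mZn).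
have m2ZpT := mR _ (mwrtM sig (mwrt_cst sig 2) mZp).
have mUsqT := mR _ (mwrtD sig (mwrtM sig mUk mUk) msq).
have c2 : (0 : R) <= 2 by [].
have s0 (f : T -> R) w : 0 <= f w ^+ 2 by rewrite sqr_ge0.
have m2n w : 0 <= 2 * (Z w * nn (D k w)) by rewrite mulr_ge0.
have m2p w : 0 <= 2 * (Z w * pp (D k w)) by rewrite mulr_ge0.
have Usq w : 0 <= U i w ^+ 2 + sq xi a k w by rewrite addr_ge0.
rewrite (intD2 mU1T m2ZnT (s0 _) m2n) (intZ2 c2 mZnT Zn0) in H.
rewrite (intD2 mUsqT m2ZpT Usq m2p) (intZ2 c2 mZpT Zp0) in H.
rewrite (intD2 mUT msqT (s0 _) sq0) in H.
apply: (ecancel _ _ H).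
- rewrite ge0_fin_numE; last by apply: integral_ge0 => w _; rewrite lee_fin.
  apply: (@le_lt_trans _ _ (\int[P]_w (eps * nn (D k w))%:E)%E).
    apply: ge0_le_integral => //.
    + by move=> w _; rewrite lee_fin.
    + exact/measurable_EFinP/mR.
    + exact/measurable_EFinP/mR/(mwrtM sig (mwrt_cst sig eps) mnn).
    + by move=> w _; rewrite lee_fin ler_wpM2r ?nn_ge0 //; case/andP: (Zb w).
  rewrite intZ2 ?ltW //; last by move=> w; exact: nn_ge0.
    by rewrite lte_mul_pinfty // ?lee_fin ?ltW // nn_fin.
  exact: mR.
- exact: (condZ hF hxi hce eps0 mZ Zb).
Qed.

End Bound.

Section Bound2.
Context (d : measure_display) (T : measurableType d) (R : realType) (P : probability T R)
  (F : nat -> set (set T)) (xi : nat -> T -> R) (a : R).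
Hypothesis hF : filtration F.
Hypothesis hxi : adapted F xi.
Hypothesis hce : forall k, cond_exp_nonpos P (F k)
     (fun w => (xi k.+1 w - xi k w) * indic_b R (a <= xi k w)).
Variables (eps : R) (N : nat).
Hypothesis eps0 : 0 < eps.

Local Notation D := (Dl xi a).
Local Notation U := (Up D eps N).
Local Notation e := (fun k => \int[P]_w (sq xi a k w)%:E)%E.

Lemma sumU i : (\int[P]_w ((U i w) ^+ 2)%:E <= \sum_(N <= j < N + i) e j)%E.
Proof.
elim: i => [|i IH].
  rewrite big_geq ?addn0 //= integral0_eq // => w _.
  by rewrite expr0n.
apply: (le_trans (stepU hF hxi hce N eps0 i)).
rewrite addnS big_nat_recr ?leq_addr //=.
exact: leeD2r.
Qed.

Lemma mA i : measurable [set w | eps <= U i w].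
Proof. exact: (@Fmeas _ _ _ hF (N + i)) (G_le _ (mU a hF hxi eps N i)). Qed.

Lemma markov i : ((eps ^+ 2)%:E * P [set w | (eps <= U i w)%R] <= \int[P]_w ((U i w) ^+ 2)%:E)%E.
Proof.
have mUi : measurable_fun setT (U i) := mwrt_meas (@Fmeas _ _ _ hF (N + i)) (mU a hF hxi eps N i).
rewrite -[X in P X]setIT -integral_indic //; last exact: mA.
have h1 : forall w, [set: T] w -> (0 <= (\1_[set w | (eps <= U i w)%R] w : R)%:E)%E.
  by move=> x hx; rewrite lee_fin indicE.
have h2 : measurable_fun setT (fun w => (\1_[set w | (eps <= U i w)%R] w : R)%:E).
  by apply/measurable_EFinP; exact: measurable_indic (mA i).
rewrite -(ge0_integralZl_EFin P measurableT h1 h2 (sqr_ge0 eps)).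
apply: ge0_le_integral => //.
- by move=> w _; rewrite lee_fin mulr_ge0 ?sqr_ge0 // indicE.
- apply/measurable_EFinP; apply: measurable_funM; first exact: measurable_cst.
  exact: measurable_indic (mA i).
- apply/measurable_EFinP; exact: measurable_funM.
move=> w _; rewrite lee_fin indicE; case: (boolP (w \in _)) => h.
  rewrite mulr1; have hw := set_mem h; rewrite /= in hw.
  by have := ltW eps0; move: hw; nra.
by rewrite mulr0 sqr_ge0.
Qed.

Lemma boundN : ((eps ^+ 2)%:E * P (\bigcup_i [set w | (eps <= U i w)%R]) <=
  \sum_(N <= k <oo) e k)%E.
Proof.
have ndA : {homo (fun i => [set w | (eps <= U i w)%R]) : n m / (n <= m)%N >-> (n <= m)%O}.
  move=> n m /subnK <-; apply/subsetPset; elim: (m - n)%N => [|k IH] //=.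
  apply: (subset_trans IH); move=> w /= h; rewrite ?addSn /=.
  by rewrite /indic_b ltNge h /= mulr0 addr0 max_l // Up_ge0.
have cv := nondecreasing_cvg_mu (mu := P) mA (bigcup_measurable (fun k _ => mA k)) ndA.
have f2 : (eps ^+ 2)%:E \is a fin_num by [].
have cv2 := cvgeZl f2 cv.
rewrite -(cvg_lim (@ereal_hausdorff R) cv2).
apply: lime_le; first by apply/cvg_ex; eexists; exact: cv2.
apply: nearW => i /=.
apply: (le_trans (markov i)); apply: (le_trans (sumU i)).
apply: nneseries_lim_ge => n _ _; apply: integral_ge0 => w _.
by rewrite lee_fin /sq mulr_ge0 ?sqr_ge0 // /indic_b; case: ifP.
Qed.

End Bound2.

Lemma esupE (R : realType) (u : (\bar R)^nat) :
  limn_esup u = ereal_inf (range (esups u)).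
Proof. by rewrite limn_esup_lim; apply: cvg_lim => //; exact: cvg_esups_inf. Qed.

Lemma esup_ev (R : realType) (u : (\bar R)^nat) (x : \bar R) :
  (limn_esup u < x)%E -> exists K, forall k, (K <= k)%N -> (u k < x)%E.
Proof.
rewrite esupE => /ereal_inf_lt [y [K _ <-]] hK; exists K => k Kk.
apply: le_lt_trans hK; apply: ereal_sup_ubound; exists k => //.
Qed.

Lemma esup_io (R : realType) (u : (\bar R)^nat) (x : \bar R) :
  (x < limn_esup u)%E -> forall N, exists2 n, (N <= n)%N & (x < u n)%E.
Proof.
rewrite esupE => hx N.
have : (x < esups u N)%E.
  apply: lt_le_trans hx _; apply: ereal_inf_lbound; exists N => //.
by move=> /ereal_sup_gt [y [n /= Nn <-] hy]; exists n.
Qed.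


Lemma last_below (R : realType) (x : nat -> R) a k1 d : x k1 < a ->
  exists k, [/\ (k1 <= k <= k1 + d)%N, x k < a &
    forall j, (k < j <= k1 + d)%N -> a <= x j].
Proof.
move=> h; elim: d => [|d [k [hk xk hj]]].
  exists k1; split => //; first by rewrite addn0 leqnn.
  move=> j /andP[h1 h2]; exfalso; lia.
have [lt|ge] := ltP (x (k1 + d.+1)%N) a.
  exists (k1 + d.+1)%N; split => //; first by rewrite leq_addr leqnn.
  move=> j /andP[h1 h2]; exfalso; lia.
exists k; split => //; first by move: hk; lia.
move=> j /andP[h1 h2].
have [->|jn] := eqVneq j (k1 + d.+1)%N; first exact: ge.
apply: hj; apply/andP; split => //; lia.
Qed.

Lemma core (dd : measure_display) (T : measurableType dd) (R : realType) (xi : nat -> T -> R) (a b eps : R) (w : T)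
    (N k1 n : nat) :
  0 < b -> 0 < eps -> (N <= k1)%N -> (k1 <= n)%N -> xi k1 w < a ->
  a + b + 2 * eps < xi n w ->
  (forall k, (k1 <= k)%N ->
     indic_b R ((xi k w < a) && (a < xi k.+1 w)) * (xi k.+1 w - a) < b + eps) ->
  eps <= Vp (Dl xi a) N (n - N) w.
Proof.
move=> b0 e0 Nk1 k1n xk1 xn hc.
have [k [/andP[k1k kn] xk hj]] := @last_below R (fun j => xi j w) a k1 (n - k1) xk1.
rewrite subnKC // in kn hj.
have kn' : (k < n)%N.
  rewrite ltn_neqAle kn andbT; apply/negP => /eqP ekn.
  by move: xk xn; rewrite ekn; lra.
have xk1a : a <= xi k.+1 w by apply: hj; lia.
have xk1b : xi k.+1 w < a + b + eps.
  have := hc k k1k; rewrite /indic_b xk /=.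
  have [h|h] := ltP a (xi k.+1 w); rewrite /= ?mul1r ?mul0r; lra.
have := @Vp_incr T R (Dl xi a) N xi (k.+1 - N) (n - N) w.
rewrite !subnKC //; last 2 first.
- lia.
- lia.
move=> /(_ _ _) h.
have := h (ltac:(lia)).
have HD : forall j, (k.+1 - N <= j < n - N)%N ->
    Dl xi a (N + j) w = xi (N + j).+1 w - xi (N + j)%N w.
  move=> j hjj; rewrite /Dl /indic_b.
  have -> : (a <= xi (N + j)%N w) by apply: hj; lia.
  by rewrite mulr1.
move=> /(_ HD) hV.
have := Vp_ge0 (Dl xi a) N (k.+1 - N) w.
move: hV xn xk1b; lra.
Qed.

Unset Implicit Arguments. Set Strict Implicit.

Theorem mainTheorem4 (d : measure_display) (T : measurableType d)
  (R : realType) (P : probability T R)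
  (F : nat -> set (set T)) (xi : nat -> T -> R) (a b : R) :
  filtration F -> adapted F xi -> 0 < b ->
  (forall k, cond_exp_nonpos P (F k)
     (fun w => (xi k.+1 w - xi k w) * indic_b R (a <= xi k w))) ->
  {ae P, forall w,
     (limn_esup (fun k => ((indic_b R ((xi k w < a) && (a < xi k.+1 w))) *
                           (xi k.+1 w - a))%:E) <= b%:E)%E} ->
  (\sum_(0 <= k <oo)
     \int[P]_w (((xi k.+1 w - xi k w) ^+ 2) * indic_b R (a <= xi k w))%:E
     < +oo)%E ->
  {ae P, forall w, switches_io xi a w ->
     (limn_esup (fun n => (xi n w)%:E) <= (a + b)%:E)%E}.
Proof.
move=> hF hxi b0 hce h2 h3.
pose eps := fun m : nat => (m.+1%:R : R)^-1.
have eps0 m : 0 < eps m by rewrite /eps invr_gt0 ltr0n.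
pose C := fun m => \bigcap_N \bigcup_i
   [set w | (eps m <= Up (Dl xi a) (eps m) N i w)%R].
have mC m : measurable (C m).
  apply: bigcapT_measurable => N; apply: bigcup_measurable => i _.
  exact: (mA a hF hxi).
have PC m : P (C m) = 0.
  have H N : (((eps m) ^+ 2)%:E * P (C m) <=
      \sum_(N <= k <oo) \int[P]_w (sq xi a k w)%:E)%E.
    apply: le_trans (boundN hF hxi hce N (eps0 m)).
    apply: lee_wpmul2l; first by rewrite lee_fin sqr_ge0.
    apply: le_measure; rewrite ?inE //.
      by apply: bigcup_measurable => i _; exact: (mA a hF hxi).
    by move=> w /(_ N I).
  have e0 k : (0 <= \int[P]_w (((xi k.+1 w - xi k w) ^+ 2) * indic_b R (a <= xi k w))%:E)%E.
    apply: integral_ge0 => w _; rewrite lee_fin mulr_ge0 ?sqr_ge0 // /indic_b.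
    by case: ifP.
  have tl := nneseries_tail_cvg h3 (fun k _ => e0 k).
  have le0 : (((eps m) ^+ 2)%:E * P (C m) <= 0)%E.
    rewrite -(cvg_lim (@ereal_hausdorff R) tl).
    apply: lime_ge; first by apply/cvg_ex; eexists; exact: tl.
    by apply: nearW => N; exact: H N.
  apply/le_anti/andP; split; last exact: measure_ge0.
  have ep : (0 < ((eps m) ^+ 2)%:E)%E by rewrite lte_fin exprn_gt0.
  by rewrite -(pmule_rle0 _ ep).
have aeC : {ae P, forall w, forall m, ~ C m w}.
  apply: ae_foralln => m; exists (C m).
  split; [exact: mC | exact: PC |].
  by move=> w /=; apply: contrapT.
apply: filterS2 h2 aeC => w hb hC hsw.
rewrite leNgt; apply/negP => hlt.
have [m hm] : exists m, ((a + b + 2 * eps m)%:E < limn_esup (fun n => (xi n w)%:E))%E.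
  move: hlt; case: (limn_esup _) => [r| |] //= hr.
  - rewrite lte_fin in hr.
    have hq : (r - (a + b)) / 2 * 2 = r - (a + b) by rewrite divfK.
    move: hq; set q := (r - (a + b)) / 2 => hq.
    have h : a + b < a + b + q by lra.
    have [m hm] := ltr_add_invr h.
    exists m; rewrite lte_fin /eps; move: hm hq hr.
    set t := (m.+1%:R : R)^-1; lra.
  - by exists 0%N; exact: ltry.
apply: (hC m) => N _.
have hbe : (limn_esup (fun k => ((indic_b R ((xi k w < a) && (a < xi k.+1 w))) *
      (xi k.+1 w - a))%:E) < (b + eps m)%:E)%E.
  by apply: le_lt_trans hb _; rewrite lte_fin ltrDl eps0.
have [K hK] := esup_ev hbe.
case: hsw => hlow _.
have [k1 k1N xk1] := hlow (maxn N K).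
have [n k1n xn] := esup_io hm k1.
exists (n - N)%N => //.
apply: V_U; apply: (core b0 (eps0 m) _ k1n xk1).
- by move: k1N; lia.
- by rewrite -lte_fin.
- by move=> k hk; rewrite -lte_fin; apply: hK; move: k1N hk; lia.
Qed.
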